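(* Let $(X,\mathcal{S})$ be a finite set system with $|X|=n=2^k$ for an integer $k\ge1$, and let the packings $\mathcal{F}_j$, the chains $F_j(S)$, the classes $\mathcal{S}_i$ and the families $\mathcal{F}_j^i$ be as defined in the context. Then for every $1\le i\le k$, every $S\in\mathcal{S}_i$ and every $j$ with $i-1\le j\le k$, $$|S\triangle F_j(S)|<\frac{n}{2^{j-1}} .$$
   Context: $\triangle$ denotes symmetric difference. Construction: set $\mathcal{F}_0=\{\emptyset\}$, and for $j=1,\dots,k$ let $\mathcal{F}_j\subseteq\mathcal{S}$ be a family that is maximal under inclusion subject to $|F\triangle F'|>n/2^j$ for all distinct $F,F'\in\mathcal{F}_j$. For $S\in\mathcal{S}$ define the nearest-neighbor chain $F_k(S):=S$ and, for $j=k,k-1,\dots,1$, let $F_{j-1}(S)$ be an element of $\mathcal{F}_{j-1}$ minimizing $|F_j(S)\triangle F|$ over $F\in\mathcal{F}_{j-1}$. For $i=1,\dots,k$ let $\mathcal{S}_i=\{S\in\mathcal{S}: n/2^i\le|S|<n/2^{i-1}\}$, and for $j=i-1,\dots,k$ let $\mathcal{F}_j^i=\{F_j(S):S\in\mathcal{S}_i\}$. *)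

(* Defs.v *)
From mathcomp Require Import all_boot.
Set Implicit Arguments. Unset Strict Implicit. Unset Printing Implicit Defensive.

Definition symdiff (T : finType) (A B : {set T}) : {set T} :=
  (A :\: B) :|: (B :\: A).

(* P is a packing at scale j: distinct members F, F' satisfy
   |F (+) F'| > n / 2^j   (written multiplicatively: n < 2^j * |F (+) F'|) *)
Definition separated (T : finType) (n j : nat) (P : {set {set T}}) : Prop :=
  forall F F', F \in P -> F' \in P -> F != F' -> n < 2 ^ j * #|symdiff F F'|.

Definition maximal_packing (T : finType) (n j : nat) (Sys P : {set {set T}}) : Prop :=
  [/\ P \subset Sys, separated n j P &
      forall Q : {set {set T}}, P \proper Q -> Q \subset Sys -> ~ separated n j Q].

Definition packings (T : finType) (n k : nat) (Sys : {set {set T}})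
  (Fam : nat -> {set {set T}}) : Prop :=
  Fam 0 = [set set0] /\ forall j, 1 <= j <= k -> maximal_packing n j Sys (Fam j).

(* ch S j = F_j(S): the nearest-neighbour chain, for every S in Sys *)
Definition nn_chains (T : finType) (k : nat) (Sys : {set {set T}})
  (Fam : nat -> {set {set T}}) (ch : {set T} -> nat -> {set T}) : Prop :=
  forall S, S \in Sys ->
    ch S k = S /\
    forall j, 1 <= j <= k ->
      ch S j.-1 \in Fam j.-1 /\
      forall F, F \in Fam j.-1 -> #|symdiff (ch S j) (ch S j.-1)| <= #|symdiff (ch S j) F|.

(* Main.v *)
Require Import Defs.
From mathcomp Require Import all_boot.
From mathcomp Require Import zify.

Lemma symdiffC (T : finType) (A B : {set T}) : symdiff A B = symdiff B A.
Proof. by rewrite /symdiff setUC. Qed.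

Lemma symdiff_tri (T : finType) (A B C : {set T}) :
  #|symdiff A C| <= #|symdiff A B| + #|symdiff B C|.
Proof.
apply: leq_trans (leq_card_setU _ _).
apply: subset_leq_card; apply/subsetP => x.
rewrite /symdiff !inE.
by case: (x \in A); case: (x \in B); case: (x \in C).
Qed.

Lemma near_exists (T : finType) (n j : nat) (Sys P : {set {set T}}) G :
  maximal_packing n j Sys P -> G \in Sys ->
  exists2 F, F \in P & 2 ^ j * #|symdiff G F| <= n.
Proof.
move=> [sPS sepP maxP] GS.
case: (boolP [exists F in P, 2 ^ j * #|symdiff G F| <= n]).
  by move=> /exists_inP [F FP HF]; exists F.
move=> /exists_inPn Hno.
have GnP : G \notin P.
  apply/negP => GP; have := Hno G GP.
  by rewrite /symdiff !setDv setU0 cards0 muln0.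
exfalso; apply: (maxP ([set G] :|: P)).
- by apply: properUr; rewrite sub1set.
- by rewrite subUset sub1set GS.
move=> F F'; rewrite !in_setU1 => /orP [/eqP-> | FP] /orP [/eqP-> | F'P] neq.
- by rewrite eqxx in neq.
- by have := Hno F' F'P; rewrite -ltnNge.
- by have := Hno F FP; rewrite -ltnNge symdiffC.
- exact: sepP.
Qed.

Theorem mainTheorem5 (T : finType) (n k : nat) (Sys : {set {set T}})
  (Fam : nat -> {set {set T}}) (ch : {set T} -> nat -> {set T}) :
  1 <= k -> #|T| = n -> n = 2 ^ k ->
  packings n k Sys Fam -> nn_chains k Sys Fam ch ->
  forall i, 1 <= i <= k ->
  forall S, S \in Sys -> n <= 2 ^ i * #|S| -> 2 ^ i * #|S| < 2 * n ->
  forall j, i.-1 <= j <= k ->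
    2 ^ j * #|symdiff S (ch S j)| < 2 * n.
Proof.
move=> k1 cT nk [F0 Fmax] nnc i _ S SS _ _ j /andP [_ jk].
have [chk chj] := nnc S SS.
have step : forall l, l < k -> 2 ^ l * #|symdiff (ch S l.+1) (ch S l)| <= n.
  move=> l lk.
  have [inF minF] := chj l.+1 lk.
  case: l lk inF minF => [|l] lk inF minF.
    rewrite expn0 mul1n -cT; exact: max_card.
  have inSys : ch S l.+2 \in Sys.
    case: (ltnP l.+2 k) => hl.
      have [H _] := chj l.+3 hl.
      have lk' : 1 <= l.+2 <= k by apply/andP; split; [|apply: ltnW].
      by have [sPS _ _] := Fmax l.+2 lk'; apply: (subsetP sPS).
    have -> : l.+2 = k by apply/eqP; rewrite eqn_leq hl andbT.
    by rewrite chk.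
  have lk'' : 1 <= l.+1 <= k by apply/andP; split => //; apply: ltnW.
  have [F FP HF] := @near_exists _ _ _ _ _ (ch S l.+2) (Fmax l.+1 lk'') inSys.
  apply: leq_trans HF; rewrite leq_mul2l; apply/orP; right; exact: minF.
have main : forall m, m <= k ->
  2 ^ (k - m) * #|symdiff S (ch S (k - m))| + 2 ^ (k - m).+1 <= 2 * n.
  elim=> [|m IH] mk.
    by rewrite subn0 chk /symdiff setDv setU0 cards0 muln0 add0n nk expnS.
  have IH' := IH (ltnW mk).
  have e : k - m = (k - m.+1).+1 by lia.
  rewrite e in IH'.
  set l := k - m.+1 in IH' *.
  have lk : l < k by rewrite /l; lia.
  have st := step l lk.
  have tri := @symdiff_tri _ S (ch S l.+1) (ch S l).
  have h := leq_mul (leqnn (2 ^ l)) tri; rewrite mulnDr in h.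
  rewrite !expnS in IH' *.
  move: IH' st h; set x := 2 ^ l.
  set a := #|symdiff S (ch S l)|; set b := #|symdiff S (ch S l.+1)|.
  set c := #|symdiff (ch S l.+1) (ch S l)|.
  move=> IH' st h; nia.
have := main (k - j) (leq_subr _ _).
rewrite subKn // => H; apply: leq_trans H; rewrite -addn1 leq_add2l expn_gt0.
done.
Qed.
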